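(* Let $X$ be a real reflexive Banach space and let $\{F_t\}_{t \in T}$ be a non-empty family of convex existence sets in $X$ directed by reverse inclusion, i.e. for any $t_1, t_2 \in T$ there is $t_3 \in T$ with $F_{t_3} \subset F_{t_1} \cap F_{t_2}$. If $F = \bigcap_{t \in T} F_t \neq \emptyset$, then $F$ is an existence set.
   Context: For a non-empty set $F \subset X$ and $x \in X$, let $R_F(x) = \{ d \in F : \|d-c\| \le \|x-c\| \text{ for all } c \in F\}$. A non-empty set $F \subset X$ is an existence set if $R_F(x) \neq \emptyset$ for every $x \in X$. *)

(* Defs.v *)
From HB Require Import structures.
From mathcomp Require Import all_boot all_order all_algebra.
From mathcomp Require Import all_classical all_reals all_analysis.
Set Implicit Arguments. Unset Strict Implicit. Unset Printing Implicit Defensive.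
Import Order.TTheory GRing.Theory Num.Theory.
Import numFieldNormedType.Exports.
Local Open Scope classical_set_scope.
Local Open Scope ring_scope.

Definition dual_elem {R : realType} {X : normedModType R} (f : X -> R) : Prop :=
  (forall (a : R) (x y : X), f (a *: x + y) = a * f x + f y) /\ continuous f.

(* Elements of the bidual X^** : linear functionals on X^* that are bounded
   w.r.t. the operator norm, i.e. |Phi f| <= C ||f|| for every f in X^*,
   written without the sup: whenever |f x| <= M |x| for all x, |Phi f| <= C M. *)
Definition bidual_elem {R : realType} {X : normedModType R}
  (Phi : (X -> R) -> R) : Prop :=
  (forall (a : R) (f g : X -> R), dual_elem f -> dual_elem g ->
      Phi (fun x => a * f x + g x) = a * Phi f + Phi g) /\
  exists C : R, forall (f : X -> R) (M : R), dual_elem f -> 0 <= M ->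
      (forall x, `|f x| <= M * `|x|) -> `|Phi f| <= C * M.

Definition reflexive_space {R : realType} (X : normedModType R) : Prop :=
  forall Phi : (X -> R) -> R, bidual_elem Phi ->
    exists x : X, forall f : X -> R, dual_elem f -> Phi f = f x.

Definition convex_set_of {R : realType} {X : normedModType R} (A : set X) : Prop :=
  forall x y : X, A x -> A y -> forall t : R, 0 <= t -> t <= 1 ->
    A (t *: x + (1 - t) *: y).

Definition RF {R : realType} {X : normedModType R} (F : set X) (x : X) : set X :=
  [set d | F d /\ forall c, F c -> `|d - c| <= `|x - c|].

Definition existence_set {R : realType} {X : normedModType R} (F : set X) : Prop :=
  F !=set0 /\ forall x : X, RF F x !=set0.

(* Main.v *)
Require Import Defs.
Set Warnings "-notation-overridden,-ambiguous-paths,-notation-incompatible-prefix,-deprecated".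
From HB Require Import structures.
From mathcomp Require Import all_boot all_order all_algebra.
From mathcomp Require Import all_classical all_reals all_analysis.
From mathcomp Require Import ring lra.
Import Order.TTheory GRing.Theory Num.Theory.
Import numFieldNormedType.Exports.
Local Open Scope classical_set_scope.
Local Open Scope ring_scope.
Section HB.
Context {R : realType} {X : normedModType R}.

Definition sublin (q : X -> R) :=
  [/\ (forall x y, q (x + y) <= q x + q y),
      (forall t x, 0 < t -> q (t *: x) <= t * q x) &
      (forall x, q x <= `|x|)].

Lemma sl0 {q} : sublin q -> q 0 = 0.
Proof.
case=> qD qZ qn; have h1 := qn 0; rewrite normr0 in h1.
have h2 := qZ 2 0 (ltac:(by [])) ; rewrite scaler0 in h2; lra.
Qed.

Lemma slN {q} x : sublin q -> - q (- x) <= q x.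
Proof.
move=> sq; have := sl0 sq; case: sq => qD _ _ h0.
by have := qD x (-x); rewrite subrr h0 => h; lra.
Qed.

Lemma slZ {q} t x : sublin q -> 0 <= t -> q (t *: x) = t * q x.
Proof.
move=> sq; have h0 := sl0 sq; case: sq => qD qZ _.
rewrite le_eqVlt => /orP[/eqP<-|t0]; first by rewrite scale0r h0 mul0r.
apply/eqP; rewrite eq_le qZ //=.
have := qZ t^-1 (t *: x); rewrite invr_gt0 scalerA mulVf ?gt_eqF // scale1r.
move=> /(_ t0) h.
by rewrite -ler_pdivlMl // mulrC -[X in _ <= X]mulrC.
Qed.

Lemma slLB {q} x : sublin q -> - `|x| <= q x.
Proof.
move=> sq; have := slN x sq; case: sq => _ _ qn; have := qn (-x).
rewrite normrN => h1 h2; lra.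
Qed.

End HB.
Section HB2.
Context {R : realType} {X : normedModType R}.

Definition cvx (K : set X) := forall x y, K x -> K y -> forall t : R, 0 <= t -> t <= 1 ->
  K (t *: x + (1 - t) *: y).

Definition Qset (q : X -> R) (K : set X) (r : R) (x : X) : set R :=
  [set e | exists m k, [/\ 0 <= m, K k & e = q (x + m *: k) - m * r]].

Definition Qc q K r x := inf (Qset q K r x).

Variables (q : X -> R) (K : set X) (r : R) (k0 : X).
Hypotheses (sq : sublin q) (Kk0 : K k0) (cK : cvx K) (Kr : forall k, K k -> r <= q k).

Lemma Qset_n0 x : Qset q K r x !=set0.
Proof. by exists (q (x + 0 *: k0) - 0 * r), 0, k0. Qed.

Lemma Qset_lb x : lbound (Qset q K r x) (- q (- x)).
Proof.
move=> _ [m [k [m0 Kk ->]]].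
have h1 := slZ m k sq m0.
have [qD _ _] := sq.
have := qD (x + m *: k) (- x); rewrite addrC addKr h1 => h2.
have h3 := Kr k Kk.
have h4 : m * r <= m * q k by rewrite ler_wpM2l.
lra.
Qed.

Lemma Qset_hlb x : has_lbound (Qset q K r x).
Proof. by exists (- q (- x)); exact: Qset_lb. Qed.

Lemma Qc_le x : Qc q K r x <= q x.
Proof.
apply: ge_inf; first exact: Qset_hlb.
by exists 0, k0; split => //; rewrite scale0r addr0 mul0r subr0.
Qed.

Lemma Qc_K k : K k -> Qc q K r (- k) <= - r.
Proof.
move=> Kk; apply: le_trans (ge_inf (Qset_hlb _) _) _.
  by exists 1, k; split.
by rewrite scale1r addNr (sl0 sq) mul1r sub0r.
Qed.

Lemma Qc_sublin : sublin (Qc q K r).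
Proof.
have [qD qZ qn] := sq.
split.
- move=> x y.
  have key : forall e1 e2, Qset q K r x e1 -> Qset q K r y e2 ->
      Qc q K r (x + y) <= e1 + e2.
    move=> _ _ [m1 [k1 [m10 Kk1 ->]]] [m2 [k2 [m20 Kk2 ->]]].
    have [m0|mp] := eqVneq (m1 + m2) 0.
      have e1 : m1 = 0 by lra.
      have e2 : m2 = 0 by lra.
      rewrite e1 e2 !scale0r !addr0 !mul0r !subr0.
      exact: le_trans (Qc_le _) (qD _ _).
    have mp' : 0 < m1 + m2 by rewrite lt_def mp /= addr_ge0.
    pose t := m1 / (m1 + m2).
    have t0 : 0 <= t by rewrite divr_ge0 // addr_ge0.
    have t1 : t <= 1 by rewrite ler_pdivrMr // mul1r lerDl.
    have Kk := cK _ _ Kk1 Kk2 t t0 t1.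
    apply: le_trans (ge_inf (Qset_hlb _) _) _.
      exists (m1 + m2), (t *: k1 + (1 - t) *: k2); split; [exact: ltW|exact: Kk|reflexivity].
    have -> : (m1 + m2) *: (t *: k1 + (1 - t) *: k2) = m1 *: k1 + m2 *: k2.
      rewrite scalerDr !scalerA; congr (_ *: _ + _ *: _).
        by rewrite /t mulrC -mulrA mulVf // mulr1.
      rewrite /t mulrBr mulr1 [X in _ - X]mulrC -mulrA mulVf // mulr1.
      by rewrite addrC addKr.
    have -> : x + y + (m1 *: k1 + m2 *: k2) = (x + m1 *: k1) + (y + m2 *: k2).
      by rewrite addrACA.
    have := qD (x + m1 *: k1) (y + m2 *: k2); lra.
  have h1 : forall e2, Qset q K r y e2 -> Qc q K r (x + y) - e2 <= Qc q K r x.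
    move=> e2 He2; apply: lb_le_inf; first exact: Qset_n0.
    move=> e1 He1; have := key _ _ He1 He2; lra.
  have : Qc q K r (x + y) - Qc q K r x <= Qc q K r y.
    apply: lb_le_inf; first exact: Qset_n0.
    move=> e2 He2; have := h1 _ He2; lra.
  lra.
- move=> t x t0.
  rewrite mulrC -ler_pdivrMr //.
  apply: lb_le_inf; first exact: Qset_n0.
  move=> _ [m [k [m0 Kk ->]]].
  rewrite ler_pdivrMr //.
  apply: le_trans (ge_inf (Qset_hlb _) _) _.
    exists (t * m), k; split; [by rewrite mulr_ge0 // ltW|exact: Kk|reflexivity].
  rewrite -scalerA -scalerDr (slZ _ _ sq (ltW t0)).
by rewrite mulrBl [q _ * _]mulrC [m * r * t]mulrC mulrA.
- by move=> x; apply: le_trans (Qc_le x) (qn x).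
Qed.

End HB2.
Section HB3.
Context {R : realType} {X : normedModType R}.

Lemma HB_ext (p : X -> R) : sublin p ->
  exists f : X -> R, (forall a x y, f (a *: x + y) = a * f x + f y) /\
                     (forall x, f x <= p x).
Proof.
move=> sp.
pose S := [set q : X -> R | sublin q /\ forall x, q x <= p x].
pose T := {q : X -> R | q \in S}.
pose Rl := fun a b : T => `[< forall x, sval b x <= sval a x >].
have pS : p \in S by apply/mem_set; split => //.
have [m mmax] : exists m : T, forall s, Rl m s -> s = m.
  apply: Zorn.
  - by move=> t; apply/asboolP => x.
  - move=> a b c /asboolP h1 /asboolP h2; apply/asboolP => x.
    exact: le_trans (h2 x) (h1 x).
  - move=> [a Ha] [b Hb] /asboolP /= h1 /asboolP /= h2; apply: eq_exist.
    by apply/funext => x; apply/le_anti; rewrite h1 h2.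
  - move=> A Atot.
    have [[a0 Aa0]|A0] := pselect (A !=set0); last first.
      exists (exist _ p pS) => s As; exfalso; apply: A0; by exists s.
    pose E x := [set sval a x | a in A].
    have En0 x : E x !=set0 by exists (sval a0 x), a0.
    have Elb x : has_lbound (E x).
      exists (- `|x|) => _ [a Aa <-].
      have /set_mem [sa _] := svalP a; exact: slLB.
    pose qi x := inf (E x).
    have qile a x : A a -> qi x <= sval a x.
      by move=> Aa; apply: ge_inf; [exact: Elb|exists a].
    have qiS : qi \in S.
      have /set_mem [[_ _ a0n] a0p] := svalP a0.
      apply/mem_set; split; [split|].
      + move=> x y.
        have key : forall a b, A a -> A b -> qi (x + y) <= sval a x + sval b y.
          move=> a b Aa Ab.
          have /set_mem [[aD _ _] _] := svalP a.
          have /set_mem [[bD _ _] _] := svalP b.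
          have [/asboolP h|/asboolP h] := Atot a b Aa Ab.
            apply: le_trans (qile b _ Ab) _; apply: le_trans (bD _ _) _.
            by rewrite lerD2r.
          apply: le_trans (qile a _ Aa) _; apply: le_trans (aD _ _) _.
          by rewrite lerD2l.
        have h1 : forall b, A b -> qi (x + y) - sval b y <= qi x.
          move=> b Ab; apply: lb_le_inf; first exact: En0.
          move=> _ [a Aa <-]; have := key a b Aa Ab; lra.
        have : qi (x + y) - qi x <= qi y.
          apply: lb_le_inf; first exact: En0.
          move=> _ [b Ab <-]; have := h1 b Ab; lra.
        lra.
      + move=> t x t0.
        rewrite mulrC -ler_pdivrMr //.
        apply: lb_le_inf; first exact: En0.
        move=> _ [a Aa <-].
        have /set_mem [[_ aZ _] _] := svalP a.
        rewrite ler_pdivrMr // mulrC.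
        exact: le_trans (qile a _ Aa) (aZ _ _ t0).
      + by move=> x; apply: le_trans (qile a0 x Aa0) (a0n x).
      + by move=> x; apply: le_trans (qile a0 x Aa0) (a0p x).
    exists (exist _ qi qiS) => s As; apply/asboolP => x /=.
    exact: qile.
pose q := sval m.
have [sq qp] : sublin q /\ (forall x, q x <= p x) by exact/set_mem/(svalP m).
have qN : forall y, q (- y) = - q y.
  move=> y.
  pose Q := Qc q [set y] (q y).
  have cK : cvx [set y] by move=> a b -> -> t _ _; rewrite -scalerDl addrC subrK scale1r.
  have Kr : forall k, [set y] k -> q y <= q k by move=> k ->.
  have sQ : sublin Q := Qc_sublin _ _ _ _ sq (erefl y) cK Kr.
  have QS : Q \in S.
    apply/mem_set; split => // x.
    exact: le_trans (Qc_le _ _ _ _ sq (erefl y) Kr x) (qp x).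
  have := mmax (exist _ Q QS).
  have -> : Rl m (exist _ Q QS).
    by apply/asboolP => x /=; exact: (Qc_le _ _ _ _ sq (erefl y) Kr x).
  move=> /(_ isT) /(congr1 sval) /= QE.
  have h := Qc_K _ _ _ sq Kr _ (erefl y).
  rewrite -/Q QE -/q in h.
  have h2 := slN y sq. rewrite -/q in h2. lra.
have [qD _ _] := sq.
have qA : forall x y, q (x + y) = q x + q y.
  move=> x y; apply/le_anti; rewrite qD /=.
  have := qD (- x) (- y); rewrite -opprD !qN; lra.
exists q; split => // a x y; rewrite qA; congr (_ + _).
have [a0|a0] := leP 0 a; first exact: slZ.
have := slZ (- a) x sq; rewrite oppr_ge0 ltW // => /(_ isT).
by rewrite scaleNr qN mulNr => /eqP; rewrite eqr_opp => /eqP.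
Qed.

End HB3.
Section Sep.
Context {R : realType} {X : normedModType R}.

Lemma lin_props (f : X -> R) : (forall a x y, f (a *: x + y) = a * f x + f y) ->
  [/\ f 0 = 0, forall x y, f (x + y) = f x + f y & forall x, f (- x) = - f x].
Proof.
move=> fl.
have f0 : f 0 = 0.
  have := fl 1 0 0; rewrite scale1r addr0 mul1r; lra.
split => //.
  by move=> x y; rewrite -[x in LHS]scale1r fl mul1r.
by move=> x; rewrite -[- x]addr0 -scaleN1r fl f0 addr0 mulN1r.
Qed.

Lemma sep (C : set X) (x0 : X) (r : R) (c0 : X) :
  convex_set_of C -> C c0 -> 0 < r -> (forall c, C c -> r <= `|x0 - c|) ->
  exists f, dual_elem f /\ forall c, C c -> f c <= f x0 - r.
Proof.
move=> cC Cc0 r0 Cr.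
pose K := [set x0 - c | c in C].
have cK : cvx K.
  move=> _ _ [c1 C1 <-] [c2 C2 <-] t t0 t1.
  exists (t *: c1 + (1 - t) *: c2); first exact: cC.
  by rewrite !scalerBr opprD addrACA -scalerDl (addrC t) subrK scale1r.
have sn : sublin (fun x : X => `|x|).
  split => //; first by move=> x y; exact: ler_normD.
  by move=> t x t0; rewrite normrZ gtr0_norm.
have Kr : forall k, K k -> r <= `|k| by move=> _ [c Cc <-]; exact: Cr.
have Kk0 : K (x0 - c0) by exists c0.
have sp := Qc_sublin _ _ _ _ sn Kk0 cK Kr.
have [f [fl fp]] := HB_ext _ sp.
have [f0 fD fN] := lin_props _ fl.
have fn : forall x, `|f x| <= `|x|.
  have [_ _ pn] := sp.
  move=> x; rewrite ler_norml; apply/andP; split.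
    by rewrite lerNl -fN; apply: le_trans (fp _) _; apply: le_trans (pn _) _; rewrite normrN.
  exact: le_trans (fp _) (pn _).
exists f; split.
  split => //.
  move=> x; apply/cvgrPdist_lt => e e0.
  near=> y.
  rewrite -fN -fD; apply: le_lt_trans (fn _) _.
  near: y.
  by apply: (@cvgr_dist_lt _ _ _ _ _ id x) => //; exact: cvg_id.
move=> c Cc.
have := Qc_K _ _ _ sn Kr _ (ex_intro2 _ _ c Cc erefl).
move=> h; have := le_trans (fp _) h.
rewrite opprB fD fN; lra.
Unshelve. all: by end_near.
Qed.

End Sep.
Section Main.
Context {R : realType} {X : normedModType R}.

Lemma dual_bound (f : X -> R) : dual_elem f -> exists M, 0 <= M /\ forall x, `|f x| <= M * `|x|.
Proof.
move=> [fl fc].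
have [f0 fD fN] := lin_props _ fl.
have := @cvgr_dist_lt _ _ _ _ _ f (f 0) (fc 0) _ ltr01.
rewrite f0 => H; have [e e0 He] := (nbhs_ballP _ _).1 (H (nbhs_filter 0)).
exists (2 / e); split; first by rewrite divr_ge0 // ltW.
move=> x.
have [->|x0] := eqVneq x 0; first by rewrite f0 !normr0 mulr0.
have nx : 0 < `|x| by rewrite normr_gt0.
pose s := e / (2 * `|x|).
have s0 : 0 < s by rewrite divr_gt0 // mulr_gt0.
have : ball (0 : X) e (s *: x).
  rewrite -ball_normE /= sub0r normrN normrZ gtr0_norm //.
  have -> : s * `|x| = e / 2 by rewrite /s; field; rewrite gt_eqF.
  by rewrite ltr_pdivrMr // ltr_pMr // ltr1n.
move=> /He /=; rewrite sub0r normrN.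
have -> : f (s *: x) = s * f x by rewrite -[s *: x]addr0 fl f0 addr0.
rewrite normrM gtr0_norm // => h.
rewrite -(ler_pM2l s0).
have -> : s * (2 / e * `|x|) = 1.
  by rewrite /s; field; rewrite ?gt_eqF.
exact: ltW.
Qed.
End Main.
Section Ultra.
Context {R : realType}.

Lemma ultra_bounded_cvg (T : Type) (U : set_system T) (g : T -> R) (M : R) :
  UltraFilter U -> (forall t, `|g t| <= M) -> exists l : R, g @ U --> l.
Proof.
move=> UU gM.
have := @segment_compact R (- M) M (fmap g U) _.
case.
- apply: nearW => t /=; rewrite in_itv /=; rewrite -ler_norml; exact: gM.
- move=> p [_ cp]; exists p => N Np.
  have [//|hC] := in_ultra_setVsetC (g @^-1` N) UU.
  have [y [Cy Ny]] := cp (~` N) N hC Np.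
  by case: Cy.
Qed.

End Ultra.

Section Approx.
Context {R : realType} {X : normedModType R}.

Lemma approx_in (G : set X) (x0 : X) : existence_set G ->
  (forall e, 0 < e -> exists g, G g /\ `|x0 - g| < e) -> G x0.
Proof.
move=> [_ /(_ x0) [p [Gp Hp]]] ap.
suff -> : x0 = p by [].
have [/eqP|hn] := eqVneq (x0 - p) 0; first by rewrite subr_eq0 => /eqP.
exfalso.
have np : 0 < `|x0 - p| by rewrite normr_gt0.
have [g [Gg Hg]] := ap (`|x0 - p| / 2) (divr_gt0 np (ltr0Sn _ 1)).
have h1 := Hp g Gg.
have h2 : `|x0 - p| <= `|x0 - g| + `|p - g|.
  have -> : x0 - p = (x0 - g) + (g - p) by rewrite addrA subrK.
  by apply: le_trans (ler_normD _ _) _; rewrite [`|g - p|]distrC.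
lra.
Qed.

End Approx.
Theorem lemma15 (R : realType) (X : completeNormedModType R) (T : Type)
  (F : T -> set X) :
  reflexive_space X ->
  inhabited T ->
  (forall t, convex_set_of (F t)) ->
  (forall t, existence_set (F t)) ->
  (forall t1 t2, exists t3, F t3 `<=` F t1 `&` F t2) ->
  \bigcap_(t in [set: T]) F t !=set0 ->
  existence_set (\bigcap_(t in [set: T]) F t).
Proof.
move=> refl [t0] cvxF exF dirF [c0 Fc0].
set Fi := \bigcap_(t in [set: T]) F t.
have FiF : forall t c, Fi c -> F t c by move=> t c /(_ t Logic.I).
split; first by exists c0.
move=> x.
pose S t := [set d | F t d /\ forall c, Fi c -> `|d - c| <= `|x - c|].
have Sne : forall t, exists d, S t d.
  move=> t; have [_ /(_ x) [d [Fd Hd]]] := exF t.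
  by exists d; split => // c /(FiF t) /Hd.
have [d dS] := choice Sne.
pose B := `|x - c0| + `|c0|.
have dB : forall t, `|d t| <= B.
  move=> t; have [_ h] := dS t; have := h c0 Fc0.
  have : `|d t| <= `|d t - c0| + `|c0|.
    by rewrite -{1}(subrK c0 (d t)) ler_normD.
  rewrite /B; lra.
pose G := [set A : set T | exists t, forall s, F s `<=` F t -> A s].
have GF : ProperFilter G.
  apply: Build_ProperFilter_ex.
    by move=> A [t Ht]; exists t; apply: Ht.
  split.
  - by exists t0.
  - move=> A1 A2 [t1 H1] [t2 H2]; have [t3 H3] := dirF t1 t2.
    exists t3 => s Hs; split; [apply: H1|apply: H2]; move=> y /Hs /H3 [] //.
  - move=> A1 A2 sA [t Ht]; exists t => s /Ht; exact: sA.
have [U [UU GU]] := ultraFilterLemma GF.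
pose Phi (h : X -> R) := lim ((fun t => h (d t)) @ U).
have fcvg : forall f, dual_elem f -> (fun t => f (d t)) @ U --> Phi f.
  move=> f df; have [M [M0 HM]] := dual_bound _ df.
  have [l Hl] : exists l : R, (fun t => f (d t)) @ U --> l.
    apply: (ultra_bounded_cvg T U _ (M * B) UU).
    by move=> t; apply: le_trans (HM _) _; rewrite ler_wpM2l.
  have -> : Phi f = l by apply: cvg_lim.
  exact: Hl.
have bid : bidual_elem Phi.
  split.
  - move=> a f g df dg.
    have Hf := fcvg f df; have Hg := fcvg g dg.
    have H : (fun t => a * f (d t) + g (d t)) @ U --> a * Phi f + Phi g.
      apply: cvgD => //; exact: cvgMl_tmp.
    exact: cvg_lim.
  - exists B => f M df M0 HM.
    have Hf := fcvg f df.
    have hb : forall t, `|f (d t)| <= B * M.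
      move=> t; apply: le_trans (HM _) _; rewrite [B * M]mulrC ler_wpM2l //.
    rewrite ler_norml; apply/andP; split.
      apply: (closed_cvg _ (@closed_ge _ (- (B * M))) _ (Phi f) Hf).
      by apply: nearW => t; have := hb t; rewrite ler_norml => /andP[].
    apply: (closed_cvg _ (@closed_le _ (B * M)) _ (Phi f) Hf).
    by apply: nearW => t; have := hb t; rewrite ler_norml => /andP[].
have [x0 Hx0] := refl Phi bid.
have Sx0 : forall t, S t x0.
  move=> t.
  have [ap|nap] := pselect (forall e, 0 < e -> exists s, S t s /\ `|x0 - s| < e).
  - split.
      apply: approx_in (exF t) _ => e e0.
      by have [s [[Fs _] Hs]] := ap e e0; exists s.
    move=> c Fc; apply/ler_addgt0Pr => e e0.
    have [s [[_ Hs] Hs2]] := ap e e0.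
    have := Hs c Fc.
    have : `|x0 - c| <= `|x0 - s| + `|s - c|.
      have -> : x0 - c = (x0 - s) + (s - c) by rewrite addrA subrK.
      exact: ler_normD.
    lra.
  - exfalso.
    have [e [e0 He]] : exists e, 0 < e /\ forall s, S t s -> e <= `|x0 - s|.
      apply: contrapT => hne; apply: nap => e e0.
      apply: contrapT => hne2; apply: hne; exists e; split => // s Ss.
      rewrite leNgt; apply/negP => hlt; apply: hne2; by exists s.
    have cS : convex_set_of (S t).
      move=> y z [Fy Hy] [Fz Hz] a a0 a1; split; first exact: cvxF.
      move=> c Fc.
      have -> : a *: y + (1 - a) *: z - c = a *: (y - c) + (1 - a) *: (z - c).
        by rewrite !scalerBr addrACA -opprD -scalerDl (addrC a) subrK scale1r.
      apply: le_trans (ler_normD _ _) _.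
      rewrite !normrZ (ger0_norm a0) ger0_norm ?subr_ge0 //.
      have h1 : a * `|y - c| <= a * `|x - c| by rewrite ler_wpM2l // Hy.
      have h2 : (1 - a) * `|z - c| <= (1 - a) * `|x - c|.
        by rewrite ler_wpM2l ?subr_ge0 // Hz.
      lra.
    have [f [df Hf]] := @sep _ _ (S t) x0 e (d t) cS (dS t) e0 He.
    have Hc := fcvg f df.
    have : Phi f <= f x0 - e.
      apply: (closed_cvg _ (@closed_le _ (f x0 - e)) _ (Phi f) Hc).
      apply: GU; exists t => s Hs; apply: Hf.
      have [Fs Hs2] := dS s; split => //; exact: Hs.
    rewrite Hx0 //; lra.
exists x0; split.
  by move=> t _; have [] := Sx0 t.
by move=> c Fc; have [_ h] := Sx0 t0; exact: h.
Qed.
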